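(* Let $A=(A_1,\dots,A_d)$ have a palindromic distribution $p$ on $\{0,1\}^d$ with $p(a)>0$ for all $a$. If the largest clique of the concentration graph of $p$ has size three, then $p$ is a palindromic Ising model, i.e. all log-linear interactions $\lambda_b=2^{-d}\sum_{a}(-1)^{a\cdot b}\log p(a)$ with $|b|\ge 3$ vanish.
   Context: Palindromic: $p(a)=p(\sim a)$ for all $a$, where $\sim a$ is the complement of the binary vector $a$. For $b\in\{0,1\}^d$, $|b|=\sum_v b_v$ and $a\cdot b=\sum_v a_vb_v$. The concentration graph of $p$ is the undirected graph on nodes $\{1,\dots,d\}$ in which the edge $\{i,j\}$ is missing if and only if $A_i\perp\!\!\!\perp A_j\mid (A_v)_{v\ne i,j}$ (equivalently, the two-factor log-linear interaction of $i,j$ and all higher interactions containing $i,j$ vanish). A clique is a maximal complete subset of nodes. An Ising model is a positive distribution on $\{0,1\}^d$ with no log-linear interaction of order higher than two; it is a palindromic Ising model if it is moreover palindromic (equivalently, has in addition uniform margins). *)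

(* Defs.v *)
From mathcomp Require Import all_boot all_order all_algebra.
From mathcomp Require Import reals exp.
Set Implicit Arguments. Unset Strict Implicit. Unset Printing Implicit Defensive.
Import Order.TTheory GRing.Theory Num.Theory.
Local Open Scope ring_scope.

(* binary vectors a in {0,1}^d, coordinates indexed by 'I_d (nodes 1..d) *)
Definition bvec (d : nat) := {ffun 'I_d -> bool}.

Section Defs.
Variables (R : realType) (d : nat).
Implicit Types (p : bvec d -> R) (a b : bvec d).

Definition bcompl a : bvec d := [ffun v => ~~ a v].
Definition bsize b : nat := (\sum_(v < d) (b v : nat))%N.
Definition bdot a b : nat := (\sum_(v < d) ((a v && b v) : nat))%N.

Definition positive_distr p := (forall a, 0 < p a) /\ \sum_(a : bvec d) p a = 1.

Definition palindromic p := forall a, p a = p (bcompl a).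

Definition bset a (i : 'I_d) (x : bool) : bvec d :=
  [ffun v => if v == i then x else a v].

(* A_i _||_ A_j | (A_v)_{v <> i,j}: for every configuration a,
   p(a_i,a_j,c) p(c) = p(a_i,c) p(a_j,c), with c = (a_v)_{v<>i,j} and
   p(c), p(a_i,c), p(a_j,c) the corresponding marginals. *)
Definition cond_indep p (i j : 'I_d) :=
  forall a,
    p a * (\sum_(x : bool) \sum_(y : bool) p (bset (bset a i x) j y))
    = (\sum_(y : bool) p (bset a j y)) * (\sum_(x : bool) p (bset a i x)).

Definition conc_edge p (i j : 'I_d) := i != j /\ ~ cond_indep p i j.

Definition complete p (S : {set 'I_d}) :=
  forall i j, i \in S -> j \in S -> i != j -> conc_edge p i j.

Definition clique p (S : {set 'I_d}) :=
  complete p S /\ forall T : {set 'I_d}, S \subset T -> complete p T -> T = S.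

Definition interaction p b : R :=
  (2 ^+ d)^-1 * \sum_(a : bvec d) (-1) ^+ (bdot a b) * ln (p a).

End Defs.

(* Main.v *)
Require Import Defs.
From mathcomp Require Import all_boot all_order all_algebra.
From mathcomp Require Import reals exp.
From mathcomp Require Import lra zify.
From Stdlib Require Import Classical.
Set Implicit Arguments. Unset Strict Implicit. Unset Printing Implicit Defensive.
Import Order.TTheory GRing.Theory Num.Theory.
Local Open Scope ring_scope.

Section Aux.
Variables (R : realType) (d : nat).
Implicit Types (p : bvec d -> R) (a b : bvec d).

Lemma bset_same a (j : 'I_d) x y : bset (bset a j x) j y = bset a j y.
Proof. by apply/ffunP => v; rewrite !ffunE; case: (v == j). Qed.

Lemma bset_comm a (i j : 'I_d) x y : i != j ->
  bset (bset a i x) j y = bset (bset a j y) i x.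
Proof.
move=> hij; apply/ffunP => v; rewrite !ffunE.
case: (eqVneq v j) => [->|hvj]; case: (eqVneq v i) => [hvi|hvi] //.
- by move: hij; rewrite eq_sym => /negbTE ->.
- by rewrite eq_sym (negbTE hij).
Qed.

Lemma bset_id a (j : 'I_d) : bset a j (a j) = a.
Proof. by apply/ffunP => v; rewrite !ffunE; case: eqP => [->|]. Qed.

Definition flip a (j : 'I_d) := bset a j (~~ a j).

Lemma flipK (j : 'I_d) : involutive (fun a => flip a j).
Proof.
move=> a; rewrite /flip bset_same ffunE eqxx negbK bset_id //.
Qed.

Lemma sign_flip a b (j : 'I_d) : b j ->
  (-1) ^+ (bdot (flip a j) b) = - ((-1) ^+ (bdot a b)) :> R.
Proof.
move=> bj; rewrite -signr_odd -(signr_odd _ (bdot a b)) /bdot.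
rewrite (bigD1 j) //= (bigD1 j (P := xpredT)) //=.
have -> : (\sum_(i < d | i != j) (flip a j i && b i))%N =
          (\sum_(i < d | i != j) (a i && b i))%N.
  by apply: eq_bigr => i hi; rewrite /flip ffunE (negbTE hi).
rewrite /flip ffunE eqxx bj !andbT !oddD.
by case: (a j); case: (odd (\sum_(i < d | i != j) a i && b i)); rewrite /= ?expr0 ?expr1 ?opprK.
Qed.

Lemma sum_flip0 b (j : 'I_d) (f : bvec d -> R) : b j ->
  (forall a, f (flip a j) = f a) ->
  \sum_a (-1) ^+ (bdot a b) * f a = 0.
Proof.
move=> bj hf.
set S := \sum_a _.
have inj : injective (fun a => flip a j) by apply: inv_inj; apply: flipK.
have : S = - S.
  rewrite {1}/S (reindex_inj inj) /= -sumrN; apply: eq_bigr => a _.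
  by rewrite hf sign_flip // mulNr.
move=> h; lra.
Qed.

Lemma bdot_compl a b : (bdot (bcompl a) b + bdot a b = bsize b)%N.
Proof.
rewrite /bdot /bsize -big_split /=; apply: eq_bigr => v _.
by rewrite ffunE; case: (a v); case: (b v).
Qed.

Lemma odd_case p b : palindromic p -> odd (bsize b) ->
  \sum_a (-1) ^+ (bdot a b) * ln (p a) = 0.
Proof.
move=> hp ho.
set S := \sum_a _.
have inv : involutive (@bcompl d).
  by move=> a; apply/ffunP => v; rewrite !ffunE negbK.
have inj := inv_inj inv.
have : S = - S.
  rewrite {1}/S (reindex_inj inj) /= -sumrN; apply: eq_bigr => a _.
  rewrite -hp -mulNr; congr (_ * _).
  rewrite -signr_odd -(signr_odd _ (bdot a b)).
  have := bdot_compl a b => /(congr1 odd); rewrite oddD ho.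
  by case: (odd _); case: (odd _); rewrite /= ?expr0 ?expr1 ?opprK.
move=> h; lra.
Qed.

Lemma bsum_gt0 (f : bool -> R) : (forall x, 0 < f x) -> 0 < \sum_x f x.
Proof. by move=> h; rewrite big_bool /= addr_gt0. Qed.

Lemma indep_case p b (i j : 'I_d) : (forall a, 0 < p a) -> i != j ->
  b i -> b j -> cond_indep p i j ->
  \sum_a (-1) ^+ (bdot a b) * ln (p a) = 0.
Proof.
move=> pos hij bi bj hc.
set Mj := fun a => \sum_(y : bool) p (bset a j y).
set Mi := fun a => \sum_(x : bool) p (bset a i x).
set M := fun a => \sum_(x : bool) \sum_(y : bool) p (bset (bset a i x) j y).
have hMj : forall a, 0 < Mj a by move=> a; apply: bsum_gt0.
have hMi : forall a, 0 < Mi a by move=> a; apply: bsum_gt0.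
have hM : forall a, 0 < M a by move=> a; apply: bsum_gt0 => x; apply: bsum_gt0.
have e : forall a, ln (p a) = ln (Mj a) + ln (Mi a) - ln (M a).
  move=> a; have := hc a; rewrite -/(M a) -/(Mj a) -/(Mi a) => /(congr1 (@ln R)).
  rewrite !lnM ?posrE //; lra.
under eq_bigr => a _ do rewrite e !mulrDr mulrN.
rewrite big_split big_split /= sumrN.
rewrite (@sum_flip0 b j (fun a => ln (Mj a))) //; last first.
  by move=> a; rewrite /Mj /=; congr (ln _); apply: eq_bigr => y _; rewrite /flip bset_same.
rewrite (@sum_flip0 b i (fun a => ln (Mi a))) //; last first.
  by move=> a; rewrite /Mi /=; congr (ln _); apply: eq_bigr => y _; rewrite /flip bset_same.
rewrite (@sum_flip0 b j (fun a => ln (M a))) //; last first.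
  move=> a; rewrite /M /=; congr (ln _); apply: eq_bigr => x _; apply: eq_bigr => y _.
  by rewrite /flip -(bset_comm _ _ _ hij) bset_same.
by rewrite !add0r oppr0.
Qed.

Lemma ext_clique p n (T : {set 'I_d}) : (#|~: T| <= n)%N -> complete p T ->
  exists U, clique p U /\ T \subset U.
Proof.
elim: n T => [|n IH] T hn hc.
- exists T; split; last exact: subxx.
  split=> // U hTU hU; apply/eqP; rewrite eq_sym eqEcard hTU /=.
  rewrite (cardsCs T) (cardsCs U) (_ : #|~: T| = 0%N) ?subn0 ?leq_subr //.
  by apply/eqP; rewrite -leqn0.
- case: (classic (clique p T)) => [hT|hT]; first by exists T; split.
  have : exists U : {set 'I_d}, T \subset U /\ complete p U /\ U <> T.
    apply: NNPP => hne; apply: hT; split=> // U h1 h2.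
    by apply: NNPP => h3; apply: hne; exists U.
  move=> [U [h1 [h2 h3]]].
  have hp : T \proper U by rewrite properEneq h1 andbT; apply/eqP => e; apply: h3; rewrite e.
  have lt : (#|~: U| < #|~: T|)%N by apply: proper_card; rewrite properC.
  have [V [hV hUV]] := IH U (leq_trans lt hn) h2.
  by exists V; split=> //; apply: subset_trans hUV.
Qed.

End Aux.

Theorem proposition5p1 (R : realType) (d : nat) (p : bvec d -> R) :
  positive_distr p ->
  palindromic p ->
  (exists S : {set 'I_d}, clique p S /\ #|S| = 3%N) ->
  (forall S : {set 'I_d}, clique p S -> (#|S| <= 3)%N) ->
  forall b : bvec d, (3 <= bsize b)%N -> interaction p b = 0.
Proof.
move=> [pos _] hpal _ hmax b hb.
rewrite /interaction.
case: (boolP (odd (bsize b))) => ho; first by rewrite odd_case ?mulr0.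
suff -> : \sum_a (-1) ^+ (bdot a b) * ln (p a) = 0 by rewrite mulr0.
apply: NNPP => hne.
set S := [set v | b v].
have cS : #|S| = bsize b.
  rewrite -sum1_card big_mkcond /bsize /=; apply: eq_bigr => v _.
  by rewrite inE; case: (b v).
have hc : complete p S.
  move=> i j; rewrite !inE => bi bj hij; split=> // hci.
  by apply: hne; apply: (indep_case pos hij bi bj hci).
have [U [hU hSU]] := @ext_clique R d p #|~: S| S (leqnn _) hc.
have := hmax U hU; have := subset_leq_card hSU.
have h4 : (3 < bsize b)%N.
  by rewrite ltn_neqAle hb andbT; apply: contraNneq ho => <-.
rewrite cS => h1 h2.
by have := leq_trans (leq_trans h4 h1) h2.
Qed.
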